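(* Let ${\cal C}$ be a semi-degenerate congruence-modular variety and $A\in{\cal C}$ a semiprime algebra. Then for every $\Omega\subseteq{\rm Con}(A)$ there exists $\theta\in{\rm Con}(A)$ such that ${\rm Ann}_{{\rm Con}(A)}(\Omega)={\rm Ann}_{{\rm Con}(A)}(\theta)$; that is, $\{{\rm Ann}_{{\rm Con}(A)}(\Omega)\mid\Omega\subseteq{\rm Con}(A)\}=\{{\rm Ann}_{{\rm Con}(A)}(\theta)\mid\theta\in{\rm Con}(A)\}$.
   Context: ${\cal C}$ semi-degenerate: no nontrivial member has a one-element subalgebra. ${\rm Con}(A)$: congruence lattice with bounds $\Delta_A,\nabla_A=A^2$; $[\cdot,\cdot]_A$: modular commutator. A congruence $\phi\ne\nabla_A$ is prime if $[\theta,\zeta]_A\subseteq\phi$ implies $\theta\subseteq\phi$ or $\zeta\subseteq\phi$. $\rho_A(\theta)$: intersection of all prime congruences containing $\theta$. $A$ semiprime: $\rho_A(\Delta_A)=\Delta_A$. In the lattice ${\rm Con}(A)$, ${\rm Ann}_{{\rm Con}(A)}(\Omega)=\{\zeta\in{\rm Con}(A)\mid\zeta\cap\omega=\Delta_A\ \forall\omega\in\Omega\}$ and ${\rm Ann}_{{\rm Con}(A)}(\theta)={\rm Ann}_{{\rm Con}(A)}(\{\theta\})$. *)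

(* Defs.v *)
From mathcomp Require Import all_boot.
Set Implicit Arguments. Unset Strict Implicit. Unset Printing Implicit Defensive.

Record signature := Signature { sym : Type; arity : sym -> nat }.

Record algebra (S : signature) := Algebra {
  carrier :> Type;
  op : forall f : sym S, ('I_(arity f) -> carrier) -> carrier }.

Inductive term (S : signature) : Type :=
| Var of nat
| App (f : sym S) of ('I_(arity f) -> term S).

Fixpoint eval (S : signature) (A : algebra S) (v : nat -> A) (t : term S) : A :=
  match t with
  | Var n => v n
  | App f g => @op S A f (fun i => eval v (g i))
  end.

(* Varieties are equational classes: the models of a set E of identities. *)
Definition models S (E : term S -> term S -> Prop) (A : algebra S) : Prop :=
  forall s t, E s t -> forall v : nat -> A, eval v s = eval v t.

Section Cong.
Variables (S : signature) (A : algebra S).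

Definition rel := A -> A -> Prop.
Definition subrel (R Q : rel) := forall x y, R x y -> Q x y.

Record con := Con {
  crel :> A -> A -> Prop;
  con_refl : forall x, crel x x;
  con_sym : forall x y, crel x y -> crel y x;
  con_trans : forall x y z, crel x y -> crel y z -> crel x z;
  con_compat : forall (f : sym S) (a b : 'I_(arity f) -> A),
      (forall i, crel (a i) (b i)) -> crel (@op S A f a) (@op S A f b) }.

Definition DeltaA : rel := fun x y => x = y.
Definition nablaA : rel := fun _ _ => True.

Definition cg (R : rel) : rel :=
  fun x y => forall th : con, subrel R th -> th x y.

Definition cmeet (a b : rel) : rel := fun x y => a x y /\ b x y.
Definition cjoin (a b : rel) : rel := cg (fun x y => a x y \/ b x y).

Definition con_modular : Prop :=
  forall a b c : con, subrel a c ->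
    forall x y, cjoin a (cmeet b c) x y <-> cmeet (cjoin a b) c x y.

(* Term condition: C(a, b; d), "a centralizes b modulo d".  Variables i with
   P i play the role of the a-tuple, the others of the b-tuple. *)
Definition centralizes (a b d : rel) : Prop :=
  forall (t : term S) (P : nat -> bool) (u w c e : nat -> A),
    (forall i, a (u i) (w i)) -> (forall i, b (c i) (e i)) ->
    let mix (p q : nat -> A) := fun i => if P i then p i else q i in
    d (eval (mix u c) t) (eval (mix u e) t) ->
    d (eval (mix w c) t) (eval (mix w e) t).

(* The (term-condition) commutator [a, b]_A: the least congruence d with
   C(a, b; d).  In congruence-modular varieties this is the modular commutator. *)
Definition comm (a b : rel) : rel :=
  fun x y => forall d : con, centralizes a b d -> d x y.

Definition prime_con (phi : con) : Prop :=
  ~ subrel nablaA phi /\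
  forall th ze : con, subrel (comm th ze) phi -> subrel th phi \/ subrel ze phi.

Definition rho (th : rel) : rel :=
  fun x y => forall phi : con, prime_con phi -> subrel th phi -> phi x y.

Definition semiprime : Prop := forall x y, rho DeltaA x y <-> DeltaA x y.

Definition Ann (Om : con -> Prop) (ze : con) : Prop :=
  forall om : con, Om om -> forall x y, cmeet ze om x y <-> DeltaA x y.
Definition Ann1 (th : con) (ze : con) : Prop := Ann (fun om => om = th) ze.
End Cong.

Definition cm_variety S (E : term S -> term S -> Prop) : Prop :=
  forall B : algebra S, models E B -> con_modular B.

Definition one_elt_subalg S (B : algebra S) (a : B) : Prop :=
  forall (f : sym S) (g : 'I_(arity f) -> B), (forall i, g i = a) -> @op S B f g = a.

Definition nontrivial S (B : algebra S) : Prop := exists x y : B, x <> y.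

Definition semi_degenerate S (E : term S -> term S -> Prop) : Prop :=
  forall B : algebra S, models E B -> nontrivial B -> ~ exists a : B, one_elt_subalg a.

(* Main.v *)
Require Import Defs.
From mathcomp Require Import all_boot.
From Stdlib Require Import FunctionalExtensionality IndefiniteDescription.
Import Defs.
Set Implicit Arguments. Unset Strict Implicit. Unset Printing Implicit Defensive.

Fixpoint subst S (s : nat -> term S) (t : term S) : term S :=
  match t with Var n => s n | App f g => App (fun i => subst s (g i)) end.

Lemma eval_subst S (A : algebra S) (v : nat -> A) s t :
  eval v (subst s t) = eval (fun i => eval v (s i)) t.
Proof.
elim: t => [n|f g IH] //=. f_equal; apply: functional_extensionality => i; exact: IH.
Qed.

Lemma eval_con S (A : algebra S) (th : con A) v v' t :
  (forall i, th (v i) (v' i)) -> th (eval v t) (eval v' t).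
Proof.
move=> H; elim: t => [n|f g IH] /=; [exact: H | apply: con_compat => i; exact: IH].
Qed.

Lemma eval_local S (A : algebra S) (t : term S) : exists N, forall v v' : nat -> A,
  (forall i, i < N -> v i = v' i) -> eval v t = eval v' t.
Proof.
elim: t => [n|f g IH].
  by exists n.+1 => v v' H /=; apply: H.
pose Nf i := proj1_sig (constructive_indefinite_description _ (IH i)).
exists (\max_(i < arity f) Nf i) => v v' H /=.
f_equal; apply: functional_extensionality => i.
apply: (proj2_sig (constructive_indefinite_description _ (IH i))) => j Hj.
apply: H; apply: leq_trans Hj _; exact: (@leq_bigmax _ Nf i).
Qed.

Definition cgcon S (A : algebra S) (R : rel A) : con A.
refine (@Con S A (cg R) _ _ _ _).
- by move=> x th _; apply: con_refl.
- by move=> x y H th HR; apply: con_sym; apply: H.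
- by move=> x y z H1 H2 th HR; apply: con_trans (H1 th HR) (H2 th HR).
- by move=> f a b H th HR; apply: con_compat => i; apply: H.
Defined.

Definition Dcon S (A : algebra S) : con A.
refine (@Con S A (@DeltaA S A) _ _ _ _); rewrite /DeltaA.
- by [].
- by move=> x y ->.
- by move=> x y z -> ->.
- by move=> f a b H; f_equal; apply: functional_extensionality.
Defined.

Definition meetcon S (A : algebra S) (a b : con A) : con A.
refine (@Con S A (cmeet a b) _ _ _ _); rewrite /cmeet.
- by move=> x; split; apply: con_refl.
- by move=> x y [H1 H2]; split; apply: con_sym.
- by move=> x y z [H1 H2] [H3 H4]; split; apply: con_trans; eauto.
- by move=> f x y H; split; apply: con_compat => i; case: (H i).
Defined.

Definition mix (T : Type) (P : nat -> bool) (p q : nat -> T) :=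
  fun i => if P i then p i else q i.
Definition upd (T : Type) (v : nat -> T) k (a : T) :=
  fun i => if i == k then a else v i.

Definition Rr S (A : algebra S) (ze : A -> A -> Prop) (a b : A) : Prop :=
  forall (t : term S) (P : nat -> bool) (u c e : nat -> A) k, P k -> (forall i, ze (c i) (e i)) ->
  (eval (mix P (upd u k a) c) t = eval (mix P (upd u k a) e) t <->
   eval (mix P (upd u k b) c) t = eval (mix P (upd u k b) e) t).

Lemma cent_mono S (A : algebra S) (a b a' b' d : rel A) :
  subrel a' a -> subrel b' b -> centralizes a b d -> centralizes a' b' d.
Proof.
move=> Ha Hb C t P u w c e Hu Hc.
exact: C t P u w c e (fun i => Ha _ _ (Hu i)) (fun i => Hb _ _ (Hc i)).
Qed.

Lemma cent_delta S (A : algebra S) (a b : con A) :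
  (forall x y, a x y -> b x y -> x = y) -> centralizes a b (@DeltaA S A).
Proof.
move=> H t P u w c e Hu Hc /= H0; rewrite /DeltaA in H0 *.
have C : centralizes a b (comm a b) by move=> t' P' u' w' c' e' Hu' Hc' /= Hcm d Hd; apply: Hd Hu' Hc' (Hcm d Hd).
have Hc0 := C t P u w c e Hu Hc.
have : comm a b (eval (fun i => if P i then w i else c i) t) (eval (fun i => if P i then w i else e i) t).
  apply: Hc0; rewrite H0 => d _; exact: con_refl.
move=> Hcm; apply: H.
- apply: (Hcm a) => t' P' u' w' c' e' Hu' Hc' /= H1.
  apply: con_trans (con_sym (eval_con _ _)) (con_trans H1 (eval_con _ _)) => i.
  + by case: (P' i); [apply: Hu'| apply: con_refl].
  + by case: (P' i); [apply: Hu'| apply: con_refl].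
- apply: (Hcm b) => t' P' u' w' c' e' Hu' Hc' /= H1.
  apply: eval_con => i; by case: (P' i); [apply: con_refl| apply: Hc'].
Qed.

Lemma Rr_compat S (A : algebra S) (ze : con A) (f : sym S) (x y : 'I_(arity f) -> A) :
  (forall j, Rr ze (x j) (y j)) -> Rr ze (@op S A f x) (@op S A f y).
Proof.
move=> Hxy t P u c e k Pk Hce.
pose sg i := if i == k then App (fun j : 'I_(arity f) => Var S (j.*2.+1)) else Var S (i.*2).
pose t' := subst sg t.
pose P' i := if odd i then true else P i./2.
pose ext (z : 'I_(arity f) -> A) (m : nat) :=
  if (insub m : option 'I_(arity f)) is Some o then z o else u 0.
pose U z i := if odd i then ext z i./2 else u i./2.
pose c' i := if odd i then c 0 else c i./2.
pose e' i := if odd i then c 0 else e i./2.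
have Hce' : forall i, ze (c' i) (e' i).
  by move=> i; rewrite /c' /e'; case: (odd i) => //; apply: con_refl.
have key : forall z (d d' : nat -> A), (forall i, d' i = if odd i then c 0 else d i./2) ->
    eval (mix P' (U z) d') t' = eval (mix P (upd u k (@op S A f z)) d) t.
  move=> z d d' Hd; rewrite /t' eval_subst; congr eval; apply: functional_extensionality => i.
  rewrite /sg /mix /upd; case: (i =P k) => [->|ne] /=.
  - rewrite Pk; f_equal; apply: functional_extensionality => j.
    rewrite /P' /U /= odd_double /= uphalf_double /ext.
    by case: insubP => [o _ Ho|]; [congr z; apply: val_inj | rewrite ltn_ord].
  -
    by rewrite /P' /U Hd odd_double doubleK.
pose zm m := fun j : 'I_(arity f) => if j < m then y j else x j.
pose Q' z := eval (mix P' (U z) c') t' = eval (mix P' (U z) e') t'.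
have step : forall m, Q' (zm m) <-> Q' (zm m.+1).
  move=> m; case: (ltnP m (arity f)) => [lt|ge].
  - pose o := Ordinal lt.
    have E1 : U (zm m) = upd (U (zm m)) (m.*2.+1) (x o).
      apply: functional_extensionality => i; rewrite /upd; case: eqP => // ->.
      rewrite /U /= odd_double /= uphalf_double /ext.
      case: insubP => [o' _ Ho'|]; last by rewrite lt.
      have -> : o' = o by apply: val_inj.
      by rewrite /zm ltnn.
    have E2 : U (zm m.+1) = upd (U (zm m)) (m.*2.+1) (y o).
      apply: functional_extensionality => i; rewrite /upd; case: eqP => [->|ne].
        rewrite /U /= odd_double /= uphalf_double /ext.
        case: insubP => [o' _ Ho'|]; last by rewrite lt.
        have -> : o' = o by apply: val_inj.
        by rewrite /zm ltnSn.
      rewrite /U; case Hi: (odd i) => //; rewrite /ext.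
      case: insubP => [o' _ Ho'|] //; rewrite /zm ltnS leq_eqVlt.
      case: eqP => // Hm; exfalso; apply: ne.
      have h : i./2 = m by rewrite -Ho'; exact: Hm.
      by rewrite -[i]odd_double_half Hi h.
    have HP' : P' (m.*2.+1) by rewrite /P' /= odd_double.
    have := Hxy o t' P' (U (zm m)) c' e' (m.*2.+1) HP' Hce'.
    by rewrite /Q' -E1 -E2.
  - have -> : zm m.+1 = zm m.
      apply: functional_extensionality => j; rewrite /zm.
      have h1 : j < m by apply: leq_trans (ltn_ord j) ge.
      by rewrite h1 ltnS (ltnW h1).
    by [].
have chain : forall m, Q' (zm 0) <-> Q' (zm m).
  elim=> [|m IH]; first by [].
  by rewrite IH; apply: step.
have Ex : zm 0 = x by apply: functional_extensionality => j; rewrite /zm ltn0.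
have Ey : zm (arity f) = y by apply: functional_extensionality => j; rewrite /zm ltn_ord.
have := chain (arity f); rewrite Ex Ey /Q'.
rewrite (key x c c') // (key x e e') // (key y c c') // (key y e e') //.
Qed.

Definition Rcon S (A : algebra S) (ze : con A) : con A.
refine (@Con S A (Rr ze) _ _ _ _).
- by move=> x t P u c e k _ _.
- by move=> x y H t P u c e k Pk Hc; apply: iff_sym; apply: H.
- by move=> x y z H1 H2 t P u c e k Pk Hc; apply: iff_trans (H1 t P u c e k Pk Hc) (H2 t P u c e k Pk Hc).
- move=> f a b H; exact: Rr_compat.
Defined.

Lemma cent_to_R S (A : algebra S) (om ze : con A) a b :
  centralizes om ze (@DeltaA S A) -> om a b -> Rr ze a b.
Proof.
move=> C Hab t P u c e k Pk Hce.
have Hu : forall a' b', om a' b' -> forall i, om (upd u k a' i) (upd u k b' i).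
  by move=> a' b' H i; rewrite /upd; case: eqP => _ //; apply: con_refl.
split => H.
- exact: (C t P _ _ c e (Hu _ _ Hab) Hce H).
- exact: (C t P _ _ c e (Hu _ _ (con_sym Hab)) Hce H).
Qed.

Lemma cent_from_R S (A : algebra S) (ze : con A) (J : rel A) :
  (forall x y, J x y -> Rr ze x y) -> centralizes J ze (@DeltaA S A).
Proof.
move=> HJ t P u w c e Hu Hce /= H0; rewrite /DeltaA in H0 *.
have [N HN] := eval_local A t.
pose um m i := if i < m then w i else u i.
have H : forall m, eval (mix P (um m) c) t = eval (mix P (um m) e) t.
  elim=> [|m IH].
    have -> : um 0 = u by apply: functional_extensionality => i; rewrite /um ltn0.
    exact: H0.
  case HP: (P m).
  - have E1 : um m = upd (um m) m (u m).
      by apply: functional_extensionality => i; rewrite /upd /um; case: eqP => // ->; rewrite ltnn.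
    have E2 : um m.+1 = upd (um m) m (w m).
      apply: functional_extensionality => i; rewrite /upd /um ltnS leq_eqVlt.
      by case: (i =P m) => [->|] //.
    rewrite E2; apply/(HJ _ _ (Hu m) t P (um m) c e m HP Hce); by rewrite -E1.
  - have Em : forall d, mix P (um m.+1) d = mix P (um m) d.
      move=> d; apply: functional_extensionality => i; rewrite /mix /um ltnS leq_eqVlt.
      by case: (i =P m) => [->|] //; rewrite HP.
    by rewrite !Em.
have HNw : forall d, eval (mix P (um N) d) t = eval (mix P w d) t.
  by move=> d; apply: HN => i Hi; rewrite /mix /um Hi.
have := H N; rewrite !HNw; exact.
Qed.

Theorem lemma2p26 (S : signature) (E : term S -> term S -> Prop)
  (hsd : semi_degenerate E) (hcm : cm_variety E)
  (A : algebra S) (hA : models E A) (hsp : semiprime A) :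
  forall Om : con A -> Prop, exists th : con A,
    forall ze : con A, Ann Om ze <-> Ann1 th ze.
Proof.
move=> Om.
pose U := fun x y : A => exists om : con A, Om om /\ om x y.
have sub : forall om, Om om -> forall x y, om x y -> cgcon U x y.
  by move=> om Hom x y H th Hth; apply: Hth; exists om.
exists (cgcon U) => ze; split.
- move=> Hann om -> x y; split; last by move=> <-; split; apply: con_refl.
  case=> Hz HJ.
  have HR : forall x y, cgcon U x y -> Rr ze x y.
    move=> x' y' H; apply: (H (Rcon ze)) => a b [om' [Hom Hab]].
    apply: (@cent_to_R S A om' ze a b _ Hab); apply: cent_delta => p q Hp Hq.
    by apply/(Hann om' Hom p q).
  have C := cent_from_R HR.
  pose mu := meetcon (cgcon U) ze.
  apply/hsp => phi [Hnab Hprime] HD.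
  have Hmu : subrel mu phi.
    have Hc : subrel (comm mu mu) phi.
      move=> p q Hpq; apply: HD; apply: (Hpq (Dcon A)).
      apply: cent_mono C; by move=> p' q' [].
    by case: (Hprime mu mu Hc).
  by apply: Hmu; split.
- move=> H1 om Hom x y; split; last by move=> <-; split; apply: con_refl.
  case=> Hz Ho; apply: (H1 (cgcon U) erefl x y).1; split => //.
  exact: sub Hom x y Ho.
Qed.
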